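(* Let $(\boldsymbol X,Y)\sim\mathbb{P}_{\boldsymbol X,Y}$ with $\boldsymbol X\in\mathcal{X}\subset\mathbb{R}^{d_1\times d_2}$, $Y=f(\boldsymbol X)+\varepsilon$ where $f(\boldsymbol X)=\mathbb{E}(Y|\boldsymbol X)$, $f:\mathcal{X}\to[-1,1]$, $\varepsilon$ is a bounded mean-zero noise (possibly depending on $\boldsymbol X$) and $Y\in[-1,1]$. Fix $\pi\in[-1,1]$ and $r\in\mathbb{N}_+$, and suppose $f$ is $(r,\pi)$-sign representable. Then for every function $\bar f:\mathcal{X}\to\mathbb{R}$ with $\mathrm{sgn}\,\bar f=\mathrm{sgn}(f-\pi)$ on $\mathcal{X}$, we have $\mathrm{Risk}_\pi(\bar f)=\inf\{\mathrm{Risk}_\pi(\phi):\phi\in\Phi(r)\}$.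
   Context: Sign convention: $\mathrm{sgn}(x)=1$ if $x>0$ and $-1$ otherwise. $f$ is $(r,\pi)$-sign representable if there exist $\boldsymbol B\in\mathbb{R}^{d_1\times d_2}$ with $\mathrm{rank}(\boldsymbol B)\le r$ and $b\in\mathbb{R}$ such that $\mathrm{sgn}(f(\boldsymbol X)-\pi)=\mathrm{sgn}(\langle\boldsymbol X,\boldsymbol B\rangle+b)$ for all $\boldsymbol X\in\mathcal{X}$, with $\langle\boldsymbol X,\boldsymbol B\rangle=\mathrm{tr}(\boldsymbol X\boldsymbol B^T)$. $\Phi(r)=\{\phi:\boldsymbol X\mapsto\langle\boldsymbol X,\boldsymbol B\rangle+b\mid \mathrm{rank}(\boldsymbol B)\le r,\ (\boldsymbol B,b)\in\mathbb{R}^{d_1\times d_2}\times\mathbb{R}\}$. Weighted classification risk: $\mathrm{Risk}_\pi(\phi)=\frac12\mathbb{E}\big[|Y-\pi|\,|\mathrm{sgn}(Y-\pi)-\mathrm{sgn}\,\phi(\boldsymbol X)|\big]$, expectation over $(\boldsymbol X,Y)\sim\mathbb{P}_{\boldsymbol X,Y}$. *)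

(* Defs.v *)
From HB Require Import structures.
From mathcomp Require Import all_boot all_order all_algebra.
From mathcomp Require Import all_classical all_reals all_analysis.
Set Implicit Arguments. Unset Strict Implicit. Unset Printing Implicit Defensive.
Import Order.TTheory GRing.Theory Num.Theory.
Local Open Scope classical_set_scope.
Local Open Scope ring_scope.

Definition sgn (R : realType) (x : R) : R := if 0 < x then 1 else -1.

Definition matdot (R : realType) (d1 d2 : nat) (M B : 'M[R]_(d1, d2)) : R :=
  \tr (M *m B^T).

Definition Phi (R : realType) (d1 d2 r : nat) : set ('M[R]_(d1, d2) -> R) :=
  [set phi | exists (B : 'M[R]_(d1, d2)) (b : R),
     (\rank B <= r)%N /\ phi = (fun M => matdot M B + b)].

Definition sign_representable (R : realType) (d1 d2 : nat)
  (Xs : set 'M[R]_(d1, d2)) (f : 'M[R]_(d1, d2) -> R) (r : nat) (pi : R) : Prop :=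
  exists (B : 'M[R]_(d1, d2)) (b : R), (\rank B <= r)%N /\
    forall M, Xs M -> sgn (f M - pi) = sgn (matdot M B + b).

Definition sigmaX (d : measure_display) (T : measurableType d) (R : realType)
  (d1 d2 : nat) (X : T -> 'M[R]_(d1, d2)) : set (set T) :=
  <<s setT, \bigcup_(ij in [set: 'I_d1 * 'I_d2])
        preimage_set_system setT (fun w => X w ij.1 ij.2)
          (@measurable _ R) >>.

Definition is_cond_exp (d : measure_display) (T : measurableType d) (R : realType)
  (P : probability T R) (d1 d2 : nat) (X : T -> 'M[R]_(d1, d2)) (Y : T -> R)
  (g : T -> R) : Prop :=
  (forall B : set R, measurable B -> sigmaX X (g @^-1` B)) /\
  (forall E : set T, sigmaX X E ->
     (\int[P]_(w in E) (Y w)%:E = \int[P]_(w in E) (g w)%:E)%E).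

Definition Risk (d : measure_display) (T : measurableType d) (R : realType)
  (P : probability T R) (d1 d2 : nat) (X : T -> 'M[R]_(d1, d2)) (Y : T -> R)
  (pi : R) (phi : 'M[R]_(d1, d2) -> R) : \bar R :=
  ((2^-1)%:E * \int[P]_w (`|Y w - pi| * `|sgn (Y w - pi) - sgn (phi (X w))|)%:E)%E.

(* Main.v *)
Require Import Defs.
From HB Require Import structures.
From mathcomp Require Import all_boot all_order all_algebra.
From mathcomp Require Import all_classical all_reals all_analysis.
From mathcomp Require Import lra measurable_realfun.
Import Order.TTheory GRing.Theory Num.Theory.
Local Open Scope classical_set_scope.
Local Open Scope ring_scope.

Lemma sgnE (R : realType) (x : R) : sgn x = 1 \/ sgn x = -1.
Proof. by rewrite /sgn; case: ifP; [left|right]. Qed.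

Arguments sgnE {R}.

Lemma sgn_loss (R : realType) (y s : R) : s = 1 \/ s = -1 ->
  `|y| * `|sgn y - s| = `|y| - s * y.
Proof.
rewrite /sgn; case: ifPn => hy [->|->].
- by rewrite subrr normr0 mulr0 gtr0_norm // mul1r subrr.
- rewrite opprK gtr0_norm // (@ger0_norm _ (1 + 1)) //; lra.
- rewrite -leNgt in hy; rewrite ler0_norm // (_ : -1 - 1 = -(1+1)) ?normrN ?(@ger0_norm _ (1 + 1)) //; [lra|lra].
- by rewrite -leNgt in hy; rewrite opprK addNr normr0 mulr0 ler0_norm //; lra.
Qed.

Arguments sgn_loss {R}.

Lemma bnd1 (R : realType) (y : R) : -1 <= y <= 1 -> `|y| <= 2.
Proof. by case/andP => ? ?; rewrite ler_norml; apply/andP; split; lra. Qed.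

Lemma bnd2 (R : realType) (y p : R) : -1 <= y <= 1 -> -1 <= p <= 1 -> `|y - p| <= 2.
Proof. by case/andP => ? ?; case/andP => ? ?; rewrite ler_norml; apply/andP; split; lra. Qed.

Lemma matdotE (R : realType) d1 d2 (M B : 'M[R]_(d1, d2)) :
  matdot M B = \sum_i \sum_j M i j * B i j.
Proof.
rewrite /matdot /mxtrace; apply: eq_bigr => i _; rewrite !mxE.
by apply: eq_bigr => j _; rewrite mxE.
Qed.

Lemma affine_meas d (T : measurableType d) (R : realType) d1 d2
  (X : T -> 'M[R]_(d1, d2)) :
  (forall i j, measurable_fun setT (fun w => X w i j)) ->
  forall B b, measurable_fun setT (fun w => matdot (X w) B + b).
Proof.
move=> hX B b; apply: measurable_realfun.measurable_funD; last exact: measurable_cst.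
under eq_fun do rewrite matdotE.
apply: measurable_sum => i; apply: measurable_sum => j.
by apply: measurable_realfun.measurable_funM => //; exact: measurable_cst.
Qed.

Section S.
Context d (T : measurableType d) (R : realType) (P : probability T R)
  (d1 d2 : nat) (X : T -> 'M[R]_(d1, d2))
  (hX : forall i j, measurable_fun setT (fun w => X w i j)).

Let G := \bigcup_(ij in [set: 'I_d1 * 'I_d2])
        preimage_set_system setT (fun w => X w ij.1 ij.2) (@measurable _ R).

Lemma sigmaX_sub : forall E, sigmaX X E -> measurable E.
Proof.
apply: smallest_sub; first exact: sigma_algebra_measurable.
move=> _ [ij _ [U mU <-]]; exact: (hX ij.1 ij.2) measurableT U mU.
Qed.

Lemma sigmaX_affine B b : sigmaX X [set w | 0 < matdot (X w) B + b].
Proof.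
pose TX := g_sigma_algebraType G.
have hXX : forall i j, measurable_fun (setT : set TX) (fun w : TX => X w i j).
  move=> i j _ U mU; rewrite setTI; apply: sub_sigma_algebra.
  by exists (i, j) => //; exists U => //; rewrite setTI.
have := @affine_meas _ TX R d1 d2 X hXX B b measurableT _ (measurable_itv `]0, +oo[).
by rewrite setTI preimage_itvoy.
Qed.

Lemma sigmaXC E : sigmaX X E -> sigmaX X (~` E).
Proof. exact: sigma_algebraC. Qed.
End S.
Arguments sigmaX_sub {d T R d1 d2 X}.
Arguments sigmaX_affine {d T R d1 d2 X}.
Arguments sigmaXC {d T R d1 d2 X}.

Lemma bint d (T : measurableType d) (R : realType) (P : probability T R)
  (u : T -> R) (c : R) : measurable_fun setT u -> (forall w, `|u w| <= c) ->
  P.-integrable setT (EFin \o u).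
Proof.
move=> mu hu; apply: measurable_bounded_integrable => //.
  by apply: (le_lt_trans (probability_le1 P measurableT)); exact: ltry.
exists c; split; first exact: num_real.
by move=> M hM x _ /=; rewrite (le_trans (hu x)) // ltW.
Qed.

Arguments bint {d T R P u c}.

Lemma sgn_mul_le (R : realType) (s x : R) : s = 1 \/ s = -1 -> s * x <= sgn x * x.
Proof.
rewrite /sgn; case: ifPn => hx [->|->]; rewrite ?mul1r ?mulN1r //; try lra.
all: by rewrite -leNgt in hx; lra.
Qed.

Arguments sgn_mul_le {R}.

Lemma sgn_split d (T : measurableType d) (R : realType) (P : probability T R)
  (g u : T -> R) (c : R) : measurable_fun setT g -> measurable_fun setT u ->
  (forall w, `|u w| <= c) ->
  (\int[P]_w (sgn (g w) * u w)%:E =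
   \int[P]_(w in [set w | (0 < g w)%R]) (u w)%:E
   - \int[P]_(w in ~` [set w | (0 < g w)%R]) (u w)%:E)%E.
Proof.
move=> mg mu hu.
set A := [set w | (0 < g w)%R].
have mA : measurable A.
  by have := mg measurableT _ (measurable_itv `]0, +oo[); rewrite setTI preimage_itvoy.
have ms : measurable_fun setT (fun w => sgn (g w) * u w).
  apply: measurable_realfun.measurable_funM => //; rewrite /sgn.
  apply: measurable_fun_ifT => //.
  exact: measurable_realfun.measurable_fun_ltr (measurable_cst _) mg.
have iu : P.-integrable setT (EFin \o u) by exact: bint hu.
rewrite -(setUv A) integral_setU //; last 3 first.
- exact: measurableC.
- by rewrite setUv; apply/measurable_EFinP.
- by apply/disj_set2P; rewrite setICr.
congr (_ + _).
  by apply: eq_integral => w /[!inE] Aw; rewrite /sgn Aw mul1r.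
rewrite -integralN; last first.
  apply: (integrable_add_def (measurableC mA)).
  exact: (integrableS measurableT (measurableC mA) (@subsetT _ _) iu).
apply: eq_integral => w /[!inE] Aw; rewrite /sgn ifF ?mulN1r //.
by apply/negbTE/negP => H; apply: Aw.
Qed.

Arguments sgn_split {d T R P g u c}.

Lemma Risk_split d (T : measurableType d) (R : realType) (P : probability T R)
  d1 d2 (X : T -> 'M[R]_(d1, d2)) (Y : T -> R) (pi : R) (g : 'M[R]_(d1, d2) -> R) :
  measurable_fun setT Y -> (forall w, -1 <= Y w <= 1) -> -1 <= pi <= 1 ->
  measurable_fun setT (fun w => g (X w)) ->
  Risk P X Y pi g = ((2^-1)%:E * (\int[P]_w (`|Y w - pi|)%:E
     - \int[P]_w (sgn (g (X w)) * (Y w - pi))%:E))%E.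
Proof.
move=> mY hY hpi mg.
have mh : measurable_fun setT (fun w => Y w - pi).
  by apply: measurable_funB => //; exact: measurable_cst.
have bh : forall w, `|Y w - pi| <= 2.
  by move=> w; apply: bnd2.
rewrite /Risk; congr (_ * _)%E.
under eq_integral => w _ do rewrite (sgn_loss _ _ (sgnE (g (X w)))) EFinB.
rewrite integralB_EFin //.
- apply: (@bint _ _ _ _ _ 2) => //; first exact: measurableT_comp.
  by move=> w /=; rewrite normr_id.
- apply: (@bint _ _ _ _ _ 2) => //.
    apply: measurable_funM => //; rewrite /sgn; apply: measurable_fun_ifT => //.
    exact: measurable_fun_ltr (measurable_cst _) mg.
  move=> w /=; rewrite normrM; case: (sgnE (g (X w))) => ->;
    rewrite ?normrN normr1 mul1r //.
Qed.

Theorem theorem1 (d : measure_display) (T : measurableType d) (R : realType)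
  (P : probability T R) (d1 d2 : nat)
  (Xs : set 'M[R]_(d1, d2)) (X : T -> 'M[R]_(d1, d2)) (Y : T -> R)
  (f : 'M[R]_(d1, d2) -> R) (pi : R) (r : nat) :
  (forall i j, measurable_fun setT (fun w => X w i j)) ->
  measurable_fun setT Y ->
  (forall w, Xs (X w)) ->
  (forall M, Xs M -> -1 <= f M <= 1) ->
  (forall w, -1 <= Y w <= 1) ->
  is_cond_exp P X Y (f \o X) ->
  -1 <= pi <= 1 ->
  (0 < r)%N ->
  sign_representable Xs f r pi ->
  forall fbar : 'M[R]_(d1, d2) -> R,
    (forall M, Xs M -> sgn (fbar M) = sgn (f M - pi)) ->
    Risk P X Y pi fbar = ereal_inf [set Risk P X Y pi phi | phi in @Phi R d1 d2 r].
Proof.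
move=> hX mY hXs hf hY [hce1 hce2] hpi _ [B0 [b0 [rk0 hrep]]] fbar hfbar.
set phis := fun M => matdot M B0 + b0.
have mfX : measurable_fun setT (f \o X).
  move=> _ U mU; rewrite setTI; apply: (sigmaX_sub hX); exact: hce1.
have mh : measurable_fun setT (fun w => Y w - pi).
  by apply: measurable_funB => //; exact: measurable_cst.
have mk : measurable_fun setT (fun w => f (X w) - pi).
  by apply: measurable_funB => //; exact: measurable_cst.
have bh : forall w, `|Y w - pi| <= 2.
  by move=> w; apply: bnd2.
have bk : forall w, `|f (X w) - pi| <= 2.
  by move=> w; apply: bnd2 => //; apply: hf.
have hk_event : forall E, sigmaX X E ->
    (\int[P]_(w in E) (Y w - pi)%:E = \int[P]_(w in E) (f (X w) - pi)%:E)%E.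
  move=> E sE; have mE := sigmaX_sub hX _ sE.
  have iE : forall u : T -> R, measurable_fun setT u -> (forall w, `|u w| <= 2) ->
      P.-integrable E (EFin \o u).
    by move=> u mu bu; apply: (integrableS measurableT mE (@subsetT _ _)); exact: bint bu.
  have i1 : forall w : T, `|pi| <= 2.
    by move=> w; apply: bnd1.
  have bY : forall w, `|Y w| <= 2.
    by move=> w; apply: bnd1.
  have bf : forall w, `|(f \o X) w| <= 2.
    by move=> w /=; apply: bnd1; apply: hf.
  under eq_integral do rewrite EFinB.
  under [RHS]eq_integral do rewrite EFinB.
  rewrite (@integralB_EFin _ _ _ _ _ _ (fun=> pi)) //; try exact: iE.
  rewrite (@integralB_EFin _ _ _ _ _ (f \o X) (fun=> pi)) //; try exact: iE.
  - by rewrite hce2.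
have maff : forall B b, measurable_fun setT (fun w => matdot (X w) B + b).
  exact: affine_meas.
have key : forall B b,
    (\int[P]_w (sgn (matdot (X w) B + b) * (Y w - pi))%:E =
     \int[P]_w (sgn (matdot (X w) B + b) * (f (X w) - pi))%:E)%E.
  move=> B b.
  rewrite (sgn_split (maff B b) mh bh) (sgn_split (maff B b) mk bk).
  rewrite (hk_event _ (sigmaX_affine B b)) (hk_event _ (sigmaXC _ (sigmaX_affine B b))).
  by [].
have e1 : Risk P X Y pi fbar = Risk P X Y pi phis.
  rewrite /Risk; congr (_ * _)%E; apply: eq_integral => w _.
  by rewrite hfbar // hrep.
have le : forall B b, (Risk P X Y pi phis <= Risk P X Y pi (fun M => (matdot M B + b)%R))%E.
  move=> B b.
  rewrite !Risk_split //; last exact: maff.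
  apply: lee_wpmul2l; first by rewrite lee_fin invr_ge0.
  apply: leeB => //.
  rewrite /phis !key; apply: le_integral => //.
  - apply: (@bint _ _ _ _ _ 2) => //.
      apply: measurable_funM => //; rewrite /sgn; apply: measurable_fun_ifT => //.
      exact: measurable_fun_ltr (measurable_cst _) (maff B b).
    move=> w /=; rewrite normrM; case: (sgnE (matdot (X w) B + b)) => ->;
      rewrite ?normrN normr1 mul1r //.
  - apply: (@bint _ _ _ _ _ 2) => //.
      apply: measurable_funM => //; rewrite /sgn; apply: measurable_fun_ifT => //.
      exact: measurable_fun_ltr (measurable_cst _) (maff B0 b0).
    move=> w /=; rewrite normrM; case: (sgnE (matdot (X w) B0 + b0)) => ->;
      rewrite ?normrN normr1 mul1r //.
  - move=> w _; rewrite lee_fin -hrep //; exact: sgn_mul_le (sgnE _).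
apply/eqP; rewrite eq_le; apply/andP; split.
- apply: le_ereal_inf_tmp => _ [phi [B [b [_ ->]]] <-]; rewrite e1; exact: le.
- apply: ereal_inf_lbound; exists phis => //; exists B0, b0; by split.
Qed.
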